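(* Let $n\ge 1$ and $r$ be integers. A general quadratic form in $n+1$ variables has an apolar star configuration $\mathbb{X}(r)\subset\mathbb{P}^n$ if and only if $r\geq n+1$.
   Context: Let $S=\mathbb{C}[x_0,\dots,x_n]$ and $T=\mathbb{C}[y_0,\dots,y_n]$, where $T$ acts on $S$ by differentiation, $y_j=\partial/\partial x_j$. For a form $F\in S$, $F^\perp=\{\partial\in T:\partial F=0\}$. A finite set of points $\mathbb{X}\subset\mathbb{P}^n=\mathbb{P}(S_1)$ with defining ideal $I(\mathbb{X})\subseteq T$ is apolar to $F$ if $I(\mathbb{X})\subseteq F^\perp$. A star configuration $\mathbb{X}(r)\subset\mathbb{P}^n$: take $r$ linear forms $l_1,\dots,l_r\in T_1$ such that any $n+1$ of them are linearly independent; $\mathbb{X}(r)$ is the set of $\binom{r}{n}$ points obtained by intersecting the hyperplanes $\{l_i=0\}$ $n$ at a time in all possible ways (for $r<n+1$ the paper regards no star configuration as existing). ''A general form'' means any form in a suitable nonempty Zariski open subset of the space of forms of that degree. *)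

(* Defs.v *)
From HB Require Import structures.
From mathcomp Require Import all_boot all_order all_algebra.
From mathcomp Require Import mpoly.
From mathcomp Require Import complex.
From mathcomp Require Import reals.

Set Implicit Arguments.
Unset Strict Implicit.
Unset Printing Implicit Defensive.

Import GRing.Theory.
Local Open Scope ring_scope.

Section Apolarity.
Variable K : fieldType.

(* Action of T = K[y_0..y_k-1] on S = K[x_0..x_k-1] by differentiation,
   y_j = d/dx_j: a monomial y^m acts as the parallel derivative ^`M[m]. *)
Definition dact (k : nat) (D F : {mpoly K[k]}) : {mpoly K[k]} :=
  \sum_(m <- msupp D) D@_m *: F^`M[m].

Definition perp (k : nat) (F : {mpoly K[k]}) : pred {mpoly K[k]} :=
  fun D => dact D F == 0.

Definition quadratic_form (k : nat) (F : {mpoly K[k]}) : bool :=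
  all [pred m | mdeg m == 2%N] (msupp F).

(* Linear forms l_1..l_r in T_1 are given by their coefficient row vectors;
   l_j evaluated at v in S_1 (coordinates v) is (l_j *m v^T) 0 0.
   Star configuration condition (the paper requires r >= n+1): any n+1 of
   the l_j are linearly independent. *)
Definition star_forms (n r : nat) (l : 'I_r -> 'rV[K]_(n.+1)) : Prop :=
  (n.+1 <= r)%N /\
  forall f : 'I_(n.+1) -> 'I_r, injective f ->
    row_free (\matrix_(i < n.+1) l (f i)).

(* v (nonzero) represents a point of X(r): it lies on n of the hyperplanes
   {l_j = 0} (indexed by an n-subset J). *)
Definition star_point (n r : nat) (l : 'I_r -> 'rV[K]_(n.+1))
    (v : 'rV[K]_(n.+1)) : Prop :=
  v != 0 /\ exists J : {set 'I_r}, #|J| = n /\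
    forall j, j \in J -> (l j *m v^T) 0 0 = 0.

Definition star_ideal (n r : nat) (l : 'I_r -> 'rV[K]_(n.+1))
    (D : {mpoly K[n.+1]}) : Prop :=
  forall v, star_point l v -> D.@[fun i => v 0 i] = 0.

Definition apolar_star (n r : nat) (l : 'I_r -> 'rV[K]_(n.+1))
    (F : {mpoly K[n.+1]}) : Prop :=
  forall D, star_ideal l D -> D \in perp F.

Definition has_apolar_star (n r : nat) (F : {mpoly K[n.+1]}) : Prop :=
  exists l : 'I_r -> 'rV[K]_(n.+1), star_forms l /\ apolar_star l F.

(* Coordinates of a quadratic form on S_2: coefficient of x_i x_j
   (with repetitions; this is a linear map S_2 -> K^((n+1)^2)). *)
Definition qcoords (n : nat) (F : {mpoly K[n.+1]}) : 'I_(n.+1 * n.+1) -> K :=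
  fun k => mxvec (\matrix_(i < n.+1, j < n.+1) F@_(U_(i) + U_(j))%MM) 0 k.

(* "A general quadratic form has property P": P holds on a nonempty
   Zariski open subset of S_2, i.e. (equivalently) on a nonempty basic
   open set { F in S_2 | G(F) <> 0 } for a polynomial G in the coordinates. *)
Definition general_quadric (n : nat) (P : {mpoly K[n.+1]} -> Prop) : Prop :=
  exists G : {mpoly K[n.+1 * n.+1]},
    (exists F0, quadratic_form F0 /\ G.@[qcoords F0] != 0) /\
    forall F, quadratic_form F -> G.@[qcoords F] != 0 -> P F.

End Apolarity.

(* Main.v *)
Require Import Defs.
From HB Require Import structures.
From mathcomp Require Import all_boot all_order all_algebra.
From mathcomp Require Import mpoly.
From mathcomp Require Import complex.
From mathcomp Require Import reals.
From mathcomp Require Import all_fingroup.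
Set Implicit Arguments.
Unset Strict Implicit.
Unset Printing Implicit Defensive.
Import GRing.Theory Num.Theory.
Local Open Scope ring_scope.

Section Diag.
Variable K : fieldType.
Hypothesis two_neq0 : (2%:R : K) != 0.

Lemma quad_entry n (P S : 'M[K]_n) i :
  (P *m S *m P^T) i i = (row i P *m S *m (row i P)^T) 0 0.
Proof.
rewrite !mxE; apply: eq_bigr => a _; rewrite !mxE; congr (_ * _).
by apply: eq_bigr => b _; rewrite !mxE.
Qed.

Lemma delta_quad n (S : 'M[K]_n) a b :
  ((delta_mx (0 : 'I_1) a : 'rV[K]_n) *m S *m (delta_mx (0 : 'I_1) b)^T) 0 0 = S a b.
Proof.
by rewrite -rowE trmx_delta -colE !mxE.
Qed.

Lemma tperm_quad n (T : 'M[K]_n.+1) k :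
  (tperm_mx 0 k *m T *m (tperm_mx 0 k)^T) 0 0 = T k k.
Proof.
by rewrite tr_tperm_mx -xrowE -xcolE !mxE; rewrite ?perm.tpermL ?tpermL.
Qed.


Lemma addmxE' m p (A B : 'M[K]_(m,p)) i j : (A + B) i j = A i j + B i j.
Proof. by rewrite mxE. Qed.

Lemma step1a n (S : 'M[K]_n) : S^T = S -> S != 0 ->
  exists P, P \in unitmx /\ exists k, (P *m S *m P^T) k k != 0.
Proof.
move=> sS nzS.
have [i [j nzij]] : exists i j, S i j != 0.
  case: (boolP [exists i, exists j, S i j != 0]).
    by move=> /existsP [i /existsP [j nz]]; exists i, j.
  move=> H; case/negP: nzS; apply/eqP/matrixP => i j; rewrite mxE.
  apply/eqP/negPn/negP => nz; case/negP: H; apply/existsP; exists i; apply/existsP; exists j.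
  exact nz.
case: (boolP [exists k, S k k != 0]).
  move=> /existsP [k nzk].
  by exists 1%:M; split; [exact: unitmx1 | exists k; rewrite mul1mx trmx1 mulmx1].
move=> Hd.
have Hd' : forall k, S k k = 0.
  move=> k; apply/eqP/negPn/negP => nz; case/negP: Hd; apply/existsP; exists k; exact nz.
have ij : i != j by apply/eqP => eij; move: nzij; rewrite eij Hd' eqxx.
exists (1%:M + delta_mx i j); split.
  have H1 : (1%:M + delta_mx i j) *m (1%:M - delta_mx i j) = 1%:M :> 'M[K]_n.
    rewrite mulmxDl !mulmxBr !mul1mx mulmx1 mul_delta_mx_0 1?eq_sym //.
    by rewrite subr0 subrK.
  by case: (mulmx1_unit H1).
exists i; rewrite quad_entry.
have -> : row i (1%:M + delta_mx i j) = (delta_mx 0 i : 'rV[K]_n) + delta_mx 0 j.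
  by apply/rowP => a; rewrite !mxE eqxx /= eq_sym.
rewrite raddfD /= !mulmxDl !mulmxDr !addmxE'.
rewrite !delta_quad Hd' (Hd' j) add0r addr0.
have -> : S j i = S i j by rewrite -{1}sS mxE.
rewrite -mulr2n -mulr_natl mulf_neq0 //.
Qed.

Lemma block_step n (S1 : 'M[K]_(1 + n)) : S1^T = S1 -> S1 0 0 != 0 ->
  let a := S1 0 0 in let b := ursubmx S1 in
  let E := block_mx 1%:M 0 (- (a^-1 *: b^T)) 1%:M in
  E \in unitmx /\
  E *m S1 *m E^T = block_mx a%:M 0 0 (drsubmx S1 - a^-1 *: (b^T *m b)).
Proof.
move=> sS nz a b E; split.
  by rewrite unitmxE det_lblock !det1 mulr1 unitr1.
have ul : ulsubmx S1 = a%:M.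
  apply/matrixP => i j; rewrite !ord1 !mxE /=.
  by congr (S1 _ _); apply/val_inj.
have dl : dlsubmx S1 = b^T by rewrite /b trmx_ursub sS.
have ET : E^T = block_mx 1%:M (- (a^-1 *: b)) 0 1%:M.
  by rewrite /E tr_block_mx !trmx1 trmx0 linearN /= linearZ /= trmxK.
rewrite ET -{1}(submxK S1) ul dl /E !mulmx_block.
rewrite ?mul1mx ?mul0mx ?mulmx0 ?mulmx1 ?addr0 ?add0r ?mul_mx_scalar -/b.
have h1 : a *: - (a^-1 *: b^T) + b^T = 0.
  by rewrite scalerN scalerA mulfV // scale1r addNr.
have h2 : a%:M *m - (a^-1 *: b) + b = 0.
  by rewrite mul_scalar_mx scalerN scalerA mulfV // scale1r addNr.
by rewrite h1 h2 mul0mx add0r mulNmx -scalemxAl addrC.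
Qed.


Lemma sym_diag n (S : 'M[K]_n) : S^T = S ->
  exists2 W, W \in unitmx & exists c : 'rV[K]_n, W *m S *m W^T = diag_mx c.
Proof.
elim: n S => [|n IH] S sS.
  exists 1%:M; first exact: unitmx1.
  by exists 0; apply/matrixP => [[]].
have [->|nzS] := eqVneq S 0.
  exists 1%:M; first exact: unitmx1.
  by exists 0; rewrite mulmx0 mul0mx; apply/matrixP => i j; rewrite !mxE mul0rn.
have [P1 [uP1 [k nzk]]] := step1a sS nzS.
pose P := tperm_mx 0 k *m P1.
pose S1 : 'M_(1 + n) := P *m S *m P^T.
have sS1 : S1^T = S1.
  by rewrite /S1 (trmx_mul (P *m S)) trmxK (trmx_mul P S) sS mulmxA.
have nz1 : S1 0 0 != 0.
  rewrite /S1 /P trmx_mul !mulmxA.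
  have -> : tperm_mx 0 k *m P1 *m S *m P1^T *m (tperm_mx 0 k)^T =
     tperm_mx 0 k *m (P1 *m S *m P1^T) *m (tperm_mx 0 k)^T by rewrite !mulmxA.
  by rewrite tperm_quad.
have [uE eqE] := block_step sS1 nz1.
set a := S1 0 0 in uE eqE; set b := ursubmx S1 in uE eqE.
set E := block_mx _ _ _ _ in uE eqE.
set S2 := drsubmx S1 - _ in eqE.
have sS2 : S2^T = S2.
  by rewrite /S2 linearB /= linearZ /= trmx_mul trmxK trmx_drsub sS1.
have [W' uW' [c' eqW']] := IH S2 sS2.
pose B : 'M_(1 + n) := block_mx 1%:M 0 0 W'.
exists (B *m E *m P).
  rewrite !unitmx_mul uE andbT; apply/andP; split.
    by rewrite unitmxE /B (@det_lblock _ 1 n) det1 mul1r -unitmxE.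
  by rewrite uP1 andbT; apply: unitmx_perm.
exists (row_mx (const_mx a : 'rV_1) c').
have -> : B *m E *m P *m S *m (B *m E *m P)^T = B *m (E *m S1 *m E^T) *m B^T.
  by rewrite /S1 !trmx_mul !mulmxA.
rewrite eqE /B tr_block_mx !trmx0 trmx1 !mulmx_block.
rewrite ?mul1mx ?mul0mx ?mulmx0 ?mulmx1 ?addr0 ?add0r eqW' ?mul0mx.
rewrite (@diag_mx_row _ n 1 (const_mx a) c').
have -> : diag_mx (const_mx a : 'rV_1) = a%:M.
  by apply/matrixP => i j; rewrite !ord1 !mxE.
by [].
Qed.

End Diag.

Section Apol.
Variable K : numFieldType.
Variable k : nat.

Definition Lf (v : 'I_k -> K) : {mpoly K[k]} := \sum_i v i *: 'X_i.
Definition vp (v : 'I_k -> K) (m : 'X_{1..k}) : K := \prod_i v i ^+ m i.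

Lemma Lf_deriv v j : (Lf v)^`M(j) = (v j)%:MP.
Proof.
rewrite /Lf raddf_sum /= (bigD1 j) //= big1 ?addr0.
  rewrite mderivZ mderivX mnm1E eqxx scale1r.
  have -> : (U_(j) - U_(j))%MM = 0%MM by apply/mnmP => i; rewrite !mnmE subnn.
  by rewrite mpolyX0 -mul_mpolyC mulr1.
move=> i ij; rewrite mderivZ mderivX mnm1E (negbTE ij) scale0r scaler0 //.
Qed.

Lemma Lf_pow_deriv v p j : (Lf v ^+ p)^`M(j) = (p%:R * v j) *: Lf v ^+ p.-1.
Proof.
elim: p => [|p IH].
  by rewrite expr0 -mpolyC1 mderivC mul0r scale0r.
rewrite exprS mderivM IH Lf_deriv mul_mpolyC -scalerAr.
case: p IH => [|p] IH /=.
  by rewrite mul0r scale0r addr0 mul1r.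
rewrite -exprS -scalerDl.
have -> : (p.+2%:R : K) = 1 + p.+1%:R by apply: mulrS.
by rewrite mulrDl mul1r.
Qed.


Lemma mdeg_split (m : 'X_{1..k}) d : mdeg m = d.+1 ->
  exists i m', m = (m' + U_(i))%MM /\ mdeg m' = d.
Proof.
move=> md.
have [i mi] : exists i, m i != 0%N.
  case: (boolP [exists i, m i != 0%N]) => [/existsP [i mi]|H]; first by exists i.
  have m0 : m = 0%MM.
    apply/mnmP => i; rewrite mnm0E; apply/eqP/negPn/negP => nz.
    by case/negP: H; apply/existsP; exists i.
  by move: md; rewrite m0 mdeg0.
exists i, (m - U_(i))%MM.
have e : m = (m - U_(i) + U_(i))%MM by rewrite submK // lep1mP.
split => //; move: md; rewrite {1}e mdegD mdeg1 addn1.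
by case.
Qed.

Lemma vp0 v : vp v 0%MM = 1.
Proof. by rewrite /vp big1 // => i _; rewrite mnm0E expr0. Qed.

Lemma vpDU v m i : vp v (m + U_(i))%MM = vp v m * v i.
Proof.
rewrite /vp (eq_bigr (fun j => v j ^+ m j * v j ^+ (U_(i))%MM j)); last first.
  by move=> j _; rewrite mnmDE exprD.
rewrite big_split /=; congr (_ * _).
rewrite (bigD1 i) //= big1 ?mulr1 ?mnm1E ?eqxx ?expr1 //.
by move=> j ij; rewrite mnm1E eq_sym (negbTE ij) expr0.
Qed.

Lemma Lf_pow_derivm v p m :
  (Lf v ^+ p)^`M[m] = ((p ^_ mdeg m)%:R * vp v m) *: Lf v ^+ (p - mdeg m).
Proof.
move: {2}(mdeg m) (erefl (mdeg m)) => d; elim: d m => [|d IH] m md.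
  move/eqP: md; rewrite mdeg_eq0 => /eqP ->.
  by rewrite mderivm0m mdeg0 ffactn0 vp0 mulr1 scale1r subn0.
have [i [m' [-> md']]] := mdeg_split md.
rewrite mderivmDm mderivmU1m IH // mderivZ Lf_pow_deriv scalerA.
rewrite mdegD mdeg1 addn1 ffactnSr vpDU natrM subnS.
congr (_ *: _); rewrite -!mulrA; congr (_ * _).
by rewrite mulrCA.
Qed.


Lemma eval_scaled (D : {mpoly K[k]}) v t :
  D.@[fun i => t * v i] = \sum_(m <- msupp D) D@_m * (t ^+ mdeg m * vp v m).
Proof.
rewrite mevalE; apply: eq_bigr => m _; congr (_ * _).
rewrite /vp (eq_bigr (fun i => t ^+ m i * v i ^+ m i)); last by move=> i _; rewrite exprMn.
by rewrite big_split /= prodrXr mdegE.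
Qed.

Lemma vanish (D : {mpoly K[k]}) v :
  (forall t, t != 0 -> D.@[fun i => t * v i] = 0) ->
  forall d, \sum_(m <- msupp D) (D@_m * vp v m) * (mdeg m == d)%:R = 0.
Proof.
move=> H d.
pose P : {poly K} := \sum_(m <- msupp D) (D@_m * vp v m) *: 'X^(mdeg m).
have HP : forall t, t != 0 -> P.[t] = 0.
  move=> t nt; rewrite -(H t nt) eval_scaled /P horner_sum.
  apply: eq_bigr => m _; rewrite hornerZ hornerXn.
  by rewrite -mulrA [vp v m * _]mulrC.
have P0 : P = 0.
  apply/eqP/negPn/negP => nz.
  pose rs := [seq (j.+1)%:R : K | j <- iota 0 (size P)].
  have := @max_poly_roots _ P rs nz.
  rewrite size_map size_iota ltnn => Hf; suff : false by []; apply: Hf.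
    apply/allP => x /mapP [j _ ->]; apply/eqP/HP.
    by rewrite pnatr_eq0.
  rewrite map_inj_uniq ?iota_uniq //.
  by move=> a b /eqP; rewrite eqr_nat eqSS => /eqP.
have := congr1 (fun p : {poly K} => p`_d) P0.
rewrite coef0 /P coef_sum => HH; apply: (etrans _ HH); apply: eq_bigr => m _.
by rewrite coefZ coefXn eq_sym.
Qed.


Lemma dact_Lf2 (D : {mpoly K[k]}) v :
  (forall t, t != 0 -> D.@[fun i => t * v i] = 0) -> dact D (Lf v ^+ 2) = 0.
Proof.
move=> H; rewrite /dact.
under eq_bigr do rewrite Lf_pow_derivm.
transitivity (\sum_(m <- msupp D) \sum_(j < 3)
   ((D@_m * vp v m) * (mdeg m == j)%:R) *: ((2 ^_ j)%:R *: Lf v ^+ (2 - j))).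
  apply: eq_bigr => m _; rewrite !big_ord_recr big_ord0 /= add0r.
  case: (mdeg m) => [|[|[|e]]] /=.
  - by rewrite !mulr0 !scale0r !addr0 mulr1 !scalerA mulrA mulrAC.
  - by rewrite !mulr0 !scale0r ?addr0 ?add0r mulr1 !scalerA mulrA mulrAC.
  - by rewrite !mulr0 !scale0r ?addr0 ?add0r mulr1 !scalerA mulrA mulrAC.
  - by rewrite !mulr0 !scale0r !addr0 ffact_small // mul0r scale0r scaler0.
rewrite exchange_big big1 // => j _.
by rewrite -scaler_suml vanish // scale0r.
Qed.


Lemma dact_sum (D : {mpoly K[k]}) (c : 'I_k -> K) (G : 'I_k -> {mpoly K[k]}) :
  dact D (\sum_l c l *: G l) = \sum_l c l *: dact D (G l).
Proof.
rewrite /dact.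
under eq_bigr do rewrite linear_sum scaler_sumr.
rewrite exchange_big /=; apply: eq_bigr => l _.
rewrite scaler_sumr; apply: eq_bigr => m _.
by rewrite mderivmZ !scalerA mulrC.
Qed.

Definition Q (A : 'M[K]_k) : {mpoly K[k]} :=
  \sum_i \sum_j A i j *: ('X_i * 'X_j).

Lemma QD A B : Q (A + B) = Q A + Q B.
Proof.
rewrite /Q -big_split; apply: eq_bigr => i _.
rewrite -big_split; apply: eq_bigr => j _.
by rewrite mxE scalerDl.
Qed.

Lemma QZ a A : Q (a *: A) = a *: Q A.
Proof.
rewrite /Q scaler_sumr; apply: eq_bigr => i _.
rewrite scaler_sumr; apply: eq_bigr => j _.
by rewrite mxE scalerA.
Qed.

Lemma Qtr A : Q A^T = Q A.
Proof.
rewrite /Q exchange_big; apply: eq_bigr => i _; apply: eq_bigr => j _.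
by rewrite mxE mulrC.
Qed.

Lemma Qdelta c a b : Q (c *: delta_mx a b) = c *: ('X_a * 'X_b).
Proof.
rewrite QZ; congr (_ *: _).
rewrite /Q (bigD1 a) //= [X in _ + X]big1 ?addr0.
  rewrite (bigD1 b) //= [X in _ + X]big1 ?addr0.
    by rewrite mxE !eqxx scale1r.
  by move=> j jb; rewrite mxE (negbTE jb) andbF scale0r.
move=> i ia; rewrite big1 // => j _.
by rewrite mxE (negbTE ia) scale0r.
Qed.

Lemma mdeg2 (m : 'X_{1..k}) : mdeg m = 2 -> exists a b, m = (U_(a) + U_(b))%MM.
Proof.
move=> md; have [b [m1 [e1 md1]]] := mdeg_split md.
have [a [m2 [e2 md2]]] := mdeg_split md1.
move/eqP: md2; rewrite mdeg_eq0 => /eqP m20.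
by exists a, b; rewrite e1 e2 m20 add0m.
Qed.

Lemma Q_quadric (F : {mpoly K[k]}) : quadratic_form F ->
  exists A, F = Q A.
Proof.
rewrite /quadratic_form => /allP HF.
suff [A eA] : exists A, \sum_(m <- msupp F) F@_m *: 'X_[m] = Q A.
  by exists A; rewrite -eA -mpolyE.
elim: (msupp F) HF => [|m s IH] H.
  exists 0; rewrite big_nil /Q; symmetry; apply: big1 => i _; apply: big1 => j _.
  by rewrite mxE scale0r.
have [A eA] := IH (fun x xs => H x (mem_behead (s := m :: s) xs)).
have /eqP md := H m (mem_head _ _).
have [a [b eab]] := mdeg2 md.
exists (A + F@_m *: delta_mx a b).
by rewrite big_cons QD Qdelta eA addrC eab mpolyXD.
Qed.


Lemma Q_sym (F : {mpoly K[k]}) : quadratic_form F ->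
  exists S, S^T = S /\ F = Q S.
Proof.
move=> /Q_quadric [A ->].
exists (2%:R^-1 *: (A + A^T)); split.
  by rewrite linearZ /= linearD /= trmxK addrC.
rewrite QZ QD Qtr -mulr2n -scaler_nat scalerA mulVf ?scale1r //.
by rewrite pnatr_eq0.
Qed.

Lemma Lf_sq v : Lf v ^+ 2 = \sum_i \sum_j (v i * v j) *: ('X_i * 'X_j).
Proof.
rewrite expr2 /Lf mulr_suml; apply: eq_bigr => i _.
rewrite mulr_sumr; apply: eq_bigr => j _.
by rewrite -scalerAl -scalerAr scalerA.
Qed.

Lemma Q_diag (U : 'M[K]_k) (c : 'rV[K]_k) :
  Q (U *m diag_mx c *m U^T) = \sum_l c 0 l *: Lf (fun i => U i l) ^+ 2.
Proof.
rewrite /Q mul_mx_diag.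
transitivity (\sum_i \sum_j \sum_l (c 0 l * (U i l * U j l)) *: ('X_i * 'X_j)).
  apply: eq_bigr => i _; apply: eq_bigr => j _.
  rewrite mxE scaler_suml; apply: eq_bigr => l _.
  by rewrite !mxE mulrAC [_ * c 0 l]mulrC.
under eq_bigr do rewrite exchange_big.
rewrite exchange_big; apply: eq_bigr => l _.
rewrite Lf_sq scaler_sumr; apply: eq_bigr => i _.
rewrite scaler_sumr; apply: eq_bigr => j _.
by rewrite scalerA.
Qed.

End Apol.

Section Main.
Variable K : numFieldType.

Lemma vdm_unit n (f : 'I_n -> nat) : injective f ->
  (\matrix_(i, j) ((f i)%:R ^+ j : K)) \in unitmx.
Proof.
move=> injf.
have -> : (\matrix_(i, j) ((f i)%:R ^+ j : K)) =
   (Vandermonde n (\row_i ((f i)%:R : K)))^T.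
  by apply/matrixP => i j; rewrite !mxE.
rewrite unitmxE det_tr det_Vandermonde unitfE.
apply/prodf_neq0 => i _; apply/prodf_neq0 => j ij.
rewrite !mxE subr_eq0 eqr_nat; apply/negP => /eqP /injf eji.
by move: ij; rewrite eji ltnn.
Qed.


Lemma main_constr n r (F : {mpoly K[n.+1]}) : (n.+1 <= r)%N ->
  quadratic_form F -> has_apolar_star r F.
Proof.
move=> hr qF.
have two : (2%:R : K) != 0 by rewrite pnatr_eq0.
have [S [sS eF]] := Q_sym qF.
have [W uW [c eW]] := sym_diag two sS.
pose U := invmx W.
have eS : S = U *m diag_mx c *m U^T.
  rewrite -eW /U trmx_inv !mulmxA mulVmx // mul1mx -mulmxA mulmxV ?mulmx1 //.
  by rewrite unitmx_tr.
have eF' : F = \sum_l c 0 l *: Lf (fun i => U i l) ^+ 2 by rewrite eF eS Q_diag.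
pose Wall : 'M[K]_(r, n.+1) := \matrix_(j, i) ((j : nat)%:R ^+ i).
pose W0 : 'M[K]_(n.+1) := \matrix_(j, i) ((j : nat)%:R ^+ i).
have uW0 : W0 \in unitmx by apply: vdm_unit => a b /val_inj.
pose M := invmx W0 *m W.
have uM : M \in unitmx by rewrite unitmx_mul unitmx_inv uW0 uW.
pose l := fun j : 'I_r => row j Wall *m M.
pose v := fun k : 'I_n.+1 => (\row_i U i k : 'rV[K]_n.+1).
have lv : forall j k : 'I_n.+1, (l (widen_ord hr j) *m (v k)^T) 0 0 = (j == k)%:R.
  move=> j k.
  have -> : l (widen_ord hr j) = row j W.
    rewrite /l /M.
    have -> : row (widen_ord hr j) Wall = row j W0 by apply/rowP => i; rewrite !mxE.
    by rewrite mulmxA -row_mul mulmxV // -row_mul mul1mx.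
  have -> : (v k)^T = col k U by apply/colP => i; rewrite !mxE.
  have : (W *m U) j k = (j == k)%:R by rewrite /U mulmxV // mxE.
  by move=> <-; rewrite !mxE; apply: eq_bigr => p _; rewrite !mxE.
exists l; split.
  split => // f injf.
  have -> : (\matrix_(i < n.+1) l (f i)) =
      (\matrix_(i, j) (((f i : nat))%:R ^+ j : K)) *m M.
    apply/row_matrixP => i; rewrite rowK row_mul /l; congr (_ *m _).
    by apply/rowP => j; rewrite !mxE.
  rewrite row_free_unit unitmx_mul uM andbT.
  by apply: vdm_unit => a b /val_inj /injf.
move=> D HD.
rewrite unfold_in /perp; apply/eqP.
rewrite eF' dact_sum big1 // => p _.
rewrite dact_Lf2 ?scaler0 // => t nt.
have sp : star_point l (t *: v p).
  split.
    rewrite scaler_eq0 negb_or nt /=; apply/negP => /eqP v0.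
    have := lv p p; rewrite v0 trmx0 mulmx0 mxE eqxx => /eqP.
    by rewrite eq_sym oner_eq0.
  exists [set widen_ord hr j | j in [set~ p]]; split.
    rewrite card_imset; first by rewrite cardsC1 card_ord.
    by move=> a b /(congr1 val) /= /val_inj.
  move=> j /imsetP [j' j'p ->].
  rewrite linearZ /= -scalemxAr mxE lv.
  by move: j'p; rewrite in_setC1 => /negbTE ->; rewrite mulr0.
have E := HD _ sp; apply: (etrans _ E).
rewrite !mevalE; apply: eq_bigr => m _; congr (_ * _).
by apply: eq_bigr => i _; rewrite !mxE.
Qed.


End Main.

Unset Implicit Arguments.
Close Scope ring_scope.

Theorem lemma3p2 (R : realType) (n r : nat) : (1 <= n)%N ->
  (general_quadric (fun F : {mpoly R[i][n.+1]} => has_apolar_star r F)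
   <-> (n.+1 <= r)%N).
Proof.
move=> _; split.
  move=> [G [[F0 [qF0 nz]] HP]].
  by have [l [[hr _] _]] := HP F0 qF0 nz.
move=> hr; exists 1%R; split.
  exists 0%R; split; first by rewrite /quadratic_form msupp0.
  by rewrite -mpolyC1 mevalC oner_eq0.
by move=> F qF _; apply: main_constr.
Qed.
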